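(* In the standing setup with $A$ generic, for $i=1,2,3$ and all $x\in\mathbb R^6$: $\nabla p_0(x)=B_i\nabla q_i(x)$, where $p_0(x)=\tfrac18\operatorname{tr}(f_0'(x))^2$ and $q_i(x)=\tfrac18\operatorname{tr}(B_i^{\rm T}(f_0'(x))^2)$.
   Context: Standing setup: $J=\begin{pmatrix}0&I_3\\-I_3&0\end{pmatrix}$ ($6\times6$). $A$ is a fixed real $6\times 6$ skew-Hamiltonian matrix ($A^{\rm T}J=JA$). $H_0$ is a homogeneous cubic polynomial on $\mathbb R^6$ with $A\nabla^2H_0(x)=\nabla^2H_0(x)A^{\rm T}$ for all $x$ ($\nabla^2$ = Hesse matrix), $f_0=J\nabla H_0$, and $f_0'$ is its Jacobi matrix. Genericity: the characteristic polynomial of $A$ (a square of a cubic) has three pairwise distinct roots $\lambda_1,\lambda_2,\lambda_3$, each a double eigenvalue. $B_i=\alpha_iI+\beta_iA+\gamma_iA^2$ ($i=1,2,3$), where $\alpha_i+\beta_i\lambda+\gamma_i\lambda^2$ is the unique polynomial of degree $\le2$ equal to $-1$ at $\lambda_i$ and to $1$ at the other two eigenvalues; $B_i^2=I$. *)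

(* Defs.v *)
From HB Require Import structures.
From mathcomp Require Import all_boot all_order all_algebra.
Set Implicit Arguments. Unset Strict Implicit. Unset Printing Implicit Defensive.
Import Order.TTheory GRing.Theory Num.Theory.
Local Open Scope ring_scope.

Section Defs.
Variable C : numClosedFieldType.

Definition Jmat : 'M[C]_6 :=
  \matrix_(i, j) (if (j : nat) == (i : nat) + 3 then 1
                  else if (i : nat) == (j : nat) + 3 then -1 else 0).

(* x is a point of R^6 (all coordinates real) *)
Definition real_vec (x : 'cV[C]_6) : Prop := forall k, x k 0 \is Num.real.

Definition skew_hamiltonian (A : 'M[C]_6) : Prop := A^T *m Jmat = Jmat *m A.

Definition homogeneous_cubic (H : 'cV[C]_6 -> C) : Prop :=
  exists c : 'I_6 -> 'I_6 -> 'I_6 -> C,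
    (forall i j k, c i j k \is Num.real) /\
    forall x, real_vec x ->
      H x = \sum_(i < 6) \sum_(j < 6) \sum_(k < 6) c i j k * x i 0 * x j 0 * x k 0.

(* d is the partial derivative of f at the point x in coordinate direction k:
   along the real line t |-> x + t e_k, f is a polynomial function p(t)
   and d = p'(0).  (All functions considered here are polynomial.) *)
Definition has_partial (f : 'cV[C]_6 -> C) (x : 'cV[C]_6) (k : 'I_6) (d : C) : Prop :=
  exists p : {poly C},
    (forall t, t \is Num.real -> f (x + t *: delta_mx k 0) = p.[t]) /\ p`_1 = d.

Definition Bmat (A : 'M[C]_6) (al be ga : C) : 'M[C]_6 :=
  al *: 1%:M + be *: A + ga *: (A *m A).

Definition p0fun (df0 : 'cV[C]_6 -> 'M[C]_6) (x : 'cV[C]_6) : C :=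
  8^-1 * \tr (df0 x *m df0 x).

Definition qfun (B : 'M[C]_6) (df0 : 'cV[C]_6 -> 'M[C]_6) (x : 'cV[C]_6) : C :=
  8^-1 * \tr (B^T *m (df0 x *m df0 x)).

End Defs.
Arguments Jmat {C}.

(* Main.v *)
Require Import Defs.
From HB Require Import structures.
From mathcomp Require Import all_boot all_order all_algebra.
From mathcomp Require Import ring.
Import Order.TTheory GRing.Theory Num.Theory.
Local Open Scope ring_scope.
Set Implicit Arguments. Unset Strict Implicit. Unset Printing Implicit Defensive.

Section HP.
Variable C : numClosedFieldType.
Implicit Types (f g : 'cV[C]_6 -> C) (x : 'cV[C]_6).

Lemma real_line x k t : real_vec x -> t \is Num.real ->
  real_vec (x + t *: delta_mx k 0).
Proof.
move=> hx ht i; rewrite !mxE; apply: realD; first exact: hx.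
by apply: realM => //; apply: realn.
Qed.

Lemma coef1M (p q : {poly C}) : (p * q)`_1 = p`_0 * q`_1 + p`_1 * q`_0.
Proof. by rewrite coefM !big_ord_recr big_ord0 /= add0r addrC. Qed.

Lemma hp_val f x k p : (forall t, t \is Num.real -> f (x + t *: delta_mx k 0) = p.[t]) ->
  p`_0 = f x.
Proof. by move=> h; rewrite -horner_coef0 -h ?real0 // scale0r addr0. Qed.

Lemma hp_unique f x k d1 d2 : has_partial f x k d1 -> has_partial f x k d2 -> d1 = d2.
Proof.
move=> [p [hp <-]] [q [hq <-]].
suff -> : p = q by [].
apply/eqP; rewrite -subr_eq0; apply/negPn/negP => hn.
have H := @max_poly_roots _ _ [seq i%:R | i <- iota 0 (size (p - q))] hn.
have : ~~ (size [seq (i%:R : C) | i <- iota 0 (size (p - q)%R)] < size (p - q)%R)%N.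
  by rewrite size_map size_iota ltnn.
move/negP; apply; apply: H.
  apply/allP => _ /mapP [i _ ->]; apply/eqP.
  by rewrite hornerD hornerN -hp ?realn // -hq ?realn // subrr.
rewrite map_inj_uniq ?iota_uniq //.
by move=> a b /eqP; rewrite eqr_nat => /eqP.
Qed.

Lemma hp_ext f g x k d : (forall y, real_vec y -> f y = g y) -> real_vec x ->
  has_partial g x k d -> has_partial f x k d.
Proof.
move=> e hx [p [hp hd]]; exists p; split => // t ht.
by rewrite e ?hp //; apply: real_line.
Qed.

Lemma hp_ext_all f g x k d : (forall y, f y = g y) ->
  has_partial g x k d -> has_partial f x k d.
Proof. by move=> e [p [hp hd]]; exists p; split => // t ht; rewrite e hp. Qed.

Lemma hp_eq f x k d d' : has_partial f x k d -> d = d' -> has_partial f x k d'.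
Proof. by move=> h <-. Qed.

Lemma hp_const (c : C) x k : has_partial (fun _ => c) x k 0.
Proof. by exists c%:P; split => [t _|]; rewrite ?hornerC ?coefC. Qed.

Lemma hp_coord (r : 'I_6) x k : has_partial (fun y => y r 0) x k ((r == k)%:R).
Proof.
exists ((x r 0)%:P + ((r == k)%:R)%:P * 'X); split => [t _|].
  by rewrite !mxE hornerD hornerC hornerCM hornerX andbT mulrC.
by rewrite coefD coefC coefCM coefX add0r mulr1.
Qed.

Lemma hp_add f g x k d1 d2 : has_partial f x k d1 -> has_partial g x k d2 ->
  has_partial (fun y => f y + g y) x k (d1 + d2).
Proof.
move=> [p [hp <-]] [q [hq <-]]; exists (p + q); split => [t ht|].
  by rewrite hornerD hp ?hq.
by rewrite coefD.
Qed.

Lemma hp_mul f g x k d1 d2 : has_partial f x k d1 -> has_partial g x k d2 ->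
  has_partial (fun y => f y * g y) x k (f x * d2 + d1 * g x).
Proof.
move=> [p [hp <-]] [q [hq <-]]; exists (p * q); split => [t ht|].
  by rewrite hornerM hp ?hq.
by rewrite coef1M (hp_val hp) (hp_val hq).
Qed.

Lemma hp_scale (c : C) f x k d : has_partial f x k d ->
  has_partial (fun y => c * f y) x k (c * d).
Proof.
move=> [p [hp <-]]; exists (c%:P * p); split => [t ht|].
  by rewrite hornerCM hp.
by rewrite coefCM.
Qed.

Lemma hp_sum (I : Type) (r : seq I) (F : I -> 'cV[C]_6 -> C) (D : I -> C) x k :
  (forall i, has_partial (F i) x k (D i)) ->
  has_partial (fun y => \sum_(i <- r) F i y) x k (\sum_(i <- r) D i).
Proof.
move=> h; elim: r => [|i r IH].
  rewrite big_nil; apply: hp_ext_all (hp_const 0 x k) => y; by rewrite big_nil.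
rewrite big_cons; apply: hp_ext_all (hp_add (h i) IH) => y; by rewrite big_cons.
Qed.


Lemma sum_delta (F : 'I_6 -> C) k : \sum_l (l == k)%:R * F l = F k.
Proof.
rewrite (bigD1 k) //= eqxx mul1r big1 ?addr0 // => l /negPf ->.
by rewrite mul0r.
Qed.

Lemma sum_deltaE (F G : 'I_6 -> C) k : (forall l, G l = (l == k)%:R * F l) ->
  \sum_l G l = F k.
Proof. by move=> h; rewrite -sum_delta; apply: eq_bigr => l _; rewrite h. Qed.

Lemma hp_lin (u : 'I_6 -> C) x l :
  has_partial (fun y => \sum_r u r * y r 0) x l (u l).
Proof.
apply: hp_eq.
  apply: hp_sum => r; apply: hp_mul; [apply: hp_const | apply: hp_coord].
rewrite -[RHS]sum_delta; apply: eq_bigr => r _ /=; ring.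
Qed.

Lemma hp_quad (w : 'I_6 -> 'I_6 -> C) x l :
  has_partial (fun y => \sum_a \sum_b w a b * y a 0 * y b 0) x l
    (\sum_r (w l r + w r l) * x r 0).
Proof.
apply: hp_eq.
  apply: hp_sum => a; apply: hp_sum => b; apply: hp_mul;
    [apply: hp_mul; [apply: hp_const | apply: hp_coord] | apply: hp_coord].
rewrite /=.
under eq_bigr => a _ do under eq_bigr => b _ do rewrite mul0r addr0.
under eq_bigr => a _ do rewrite big_split /=.
rewrite big_split /=.
rewrite [RHS](eq_bigr (fun r => w l r * x r 0 + w r l * x r 0)); last first.
  by move=> r _; rewrite mulrDl.
rewrite big_split /= addrC; congr (_ + _).
  rewrite (sum_deltaE (F := fun a => \sum_b w a b * x b 0) (k := l)) // => a.
  by rewrite mulr_sumr; apply: eq_bigr => b _; ring.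
apply: eq_bigr => a _; rewrite (sum_deltaE (F := fun b => w a b * x a 0) (k := l)) // => b.
ring.
Qed.

Definition Wc (c : 'I_6 -> 'I_6 -> 'I_6 -> C) k a b := c k a b + c a k b + c a b k.

Lemma hp_cub (c : 'I_6 -> 'I_6 -> 'I_6 -> C) x k :
  has_partial (fun y => \sum_i \sum_j \sum_l c i j l * y i 0 * y j 0 * y l 0) x k
    (\sum_a \sum_b Wc c k a b * x a 0 * x b 0).
Proof.
apply: hp_eq.
  apply: hp_sum => i; apply: hp_sum => j; apply: hp_sum => l; apply: hp_mul;
    [apply: hp_mul; [apply: hp_mul; [apply: hp_const | apply: hp_coord] | apply: hp_coord]
    | apply: hp_coord].
rewrite /=.
under eq_bigr => i _ do under eq_bigr => j _ do under eq_bigr => l _ do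
  rewrite mul0r addr0 !mulrDl addrA.
under eq_bigr => i _ do under eq_bigr => j _ do rewrite !big_split /=.
under eq_bigr => i _ do rewrite !big_split /=.
rewrite !big_split /=.
rewrite /Wc.
rewrite [RHS](eq_bigr (fun a => \sum_b c k a b * x a 0 * x b 0 + \sum_b c a k b * x a 0 * x b 0 + \sum_b c a b k * x a 0 * x b 0)); last first.
  by move=> a _; under eq_bigr => b _ do rewrite !mulrDl; rewrite !big_split.
rewrite !big_split /=.
rewrite (_ : \sum_i \sum_j \sum_l c i j l * x i 0 * x j 0 * (l == k)%:R
   = \sum_i \sum_b c i b k * x i 0 * x b 0); last first.
  apply: eq_bigr => i _; apply: eq_bigr => j _.
  by rewrite (sum_deltaE (F := fun l => c i j l * x i 0 * x j 0) (k := k)) // => l; ring.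
rewrite (_ : \sum_i \sum_j \sum_l c i j l * x i 0 * (j == k)%:R * x l 0
   = \sum_i \sum_b c i k b * x i 0 * x b 0); last first.
  apply: eq_bigr => i _.
  rewrite (sum_deltaE (F := fun j => \sum_b c i j b * x i 0 * x b 0) (k := k)) // => j.
  by rewrite mulr_sumr; apply: eq_bigr => l _; ring.
rewrite (_ : \sum_i \sum_j \sum_l c i j l * (i == k)%:R * x j 0 * x l 0
   = \sum_i \sum_b c k i b * x i 0 * x b 0); last first.
  rewrite (sum_deltaE (F := fun i => \sum_a \sum_b c i a b * x a 0 * x b 0) (k := k)) // => i.
  rewrite mulr_sumr; apply: eq_bigr => j _.
  by rewrite mulr_sumr; apply: eq_bigr => l _; ring.
ring.
Qed.

End HP.

Section B.
Variable C : numClosedFieldType.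

Lemma eig_horner (A : 'M[C]_6) (v : 'rV_6) lam : v *m A = lam *: v ->
  forall p, v *m horner_mx A p = p.[lam] *: v.
Proof.
move=> hv; elim/poly_ind => [|p c IH].
  by rewrite rmorph0 mulmx0 horner0 scale0r.
rewrite rmorphD rmorphM /= horner_mx_X horner_mx_C mulmxDr mulmxA IH.
by rewrite -scalemxAl hv scalerA mul_mx_scalar hornerD hornerMX hornerC scalerDl.
Qed.

Lemma BB0 (A : 'M[C]_6) (k3 k2 k1 k0 : C) (lam : 'I_3 -> C) (al be ga : C) :
  k3 != 0 -> k3 *: (A *m A *m A) + k2 *: (A *m A) + k1 *: A + k0%:M = 0 ->
  injective lam -> (forall j, eigenvalue A (lam j)) ->
  (forall j, (al + be * lam j + ga * lam j ^+ 2) ^+ 2 = 1) ->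
  Bmat A al be ga *m Bmat A al be ga = 1%:M.
Proof.
move=> k3n0 hrel ilam heig hB.
pose low : {poly C} := (k2 / k3) *: 'X^2 + (k1 / k3) *: 'X + (k0 / k3)%:P.
pose pQ : {poly C} := 'X^3 + low.
have szlow : (size low < 4)%N.
  rewrite /low; apply: (leq_ltn_trans (size_polyD _ _)); rewrite gtn_max.
  apply/andP; split; last by apply: (leq_ltn_trans (size_polyC_leq1 _)).
  apply: (leq_ltn_trans (size_polyD _ _)); rewrite gtn_max.
  apply/andP; split.
    by apply: (leq_ltn_trans (size_scale_leq _ _)); rewrite size_polyXn.
  by apply: (leq_ltn_trans (size_scale_leq _ _)); rewrite size_polyX.
have szQ : size pQ = 4%N by rewrite /pQ size_polyDl size_polyXn.
have hQ : horner_mx A pQ = 0.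
  rewrite /pQ /low !rmorphD /= !linearZ /= !rmorphXn /= horner_mx_X horner_mx_C.
  apply/(@scalerI _ _ k3 k3n0); rewrite scaler0 -[RHS]hrel.
  rewrite !scalerDr !scalerA scale_scalar_mx !(mulrC k3) !divfK //.
  by rewrite !exprS expr0 !mulr1 !addrA -!mulmxE mulmxA.
pose pB : {poly C} := al%:P + be *: 'X + ga *: 'X^2.
have hBm : Bmat A al be ga = horner_mx A pB.
  rewrite /pB /Bmat !rmorphD /= !linearZ /= rmorphXn /= horner_mx_X horner_mx_C.
  by rewrite scalemx1 expr2 mulmxE.
have rootQ : forall j, pQ.[lam j] = 0.
  move=> j; have /eigenvalueP [v hv vn0] := heig j.
  have := eig_horner hv pQ; rewrite hQ mulmx0 => /esym /eqP.
  by rewrite scalemx_eq0 (negPf vn0) orbF => /eqP.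
pose r : {poly C} := pB * pB - 1.
have rootr : forall j, r.[lam j] = 0.
  move=> j; have eB : pB.[lam j] = al + be * lam j + ga * lam j ^+ 2.
    by rewrite /pB !hornerD hornerC !hornerZ hornerX hornerXn.
  by rewrite /r hornerD hornerN hornerM eB hornerC -expr2 (hB j) subrr.
have rem0 : r %% pQ = 0.
  apply/eqP; apply: contraT => hn.
  have := @max_poly_roots _ _ [:: lam 0; lam 1; lam 2] hn.
  have szr : (size (r %% pQ)%R < 4)%N.
    by rewrite -szQ ltn_modp -size_poly_gt0 szQ.
  have rt : forall j, root (r %% pQ) (lam j).
    move=> j; apply/eqP.
    have := congr1 (fun p => p.[lam j]) (divp_eq r pQ).
    by rewrite rootr hornerD hornerM rootQ mulr0 add0r => <-.
  rewrite /= !rt /= !inE.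
  have h01 : lam 0 != lam 1 by apply/eqP => /ilam.
  have h02 : lam 0 != lam 2 by apply/eqP => /ilam.
  have h12 : lam 1 != lam 2 by apply/eqP => /ilam.
  rewrite (negPf h01) (negPf h02) h12 => /(_ isT isT).
  by rewrite ltnNge -ltnS szr.
have : horner_mx A r = 0.
  by rewrite (divp_eq r pQ) rem0 addr0 rmorphM /= hQ mulr0.
rewrite /r rmorphB rmorph1 rmorphM /= -hBm => /eqP; rewrite subr_eq0 => /eqP.
by rewrite mulmxE => ->.
Qed.
Lemma BB (A : 'M[C]_6) (k3 k2 k1 k0 : C) (lam : 'I_3 -> C) (al be ga : C) :
  k3 != 0 -> k3 *: (A *m A *m A) - k2 *: (A *m A) + k1 *: A - k0%:M = 0 ->
  injective lam -> (forall j, eigenvalue A (lam j)) ->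
  (forall j, (al + be * lam j + ga * lam j ^+ 2) ^+ 2 = 1) ->
  Bmat A al be ga *m Bmat A al be ga = 1%:M.
Proof.
move=> k3n0 hrel0; apply: (BB0 (k2 := - k2) (k1 := k1) (k0 := - k0) k3n0).
by rewrite scaleNr -scalemx1 scaleNr scalemx1.
Qed.

End B.

Definition o0 : 'I_6 := @Ordinal 6 0 isT.
Definition o1 : 'I_6 := @Ordinal 6 1 isT.
Definition o2 : 'I_6 := @Ordinal 6 2 isT.
Definition o3 : 'I_6 := @Ordinal 6 3 isT.
Definition o4 : 'I_6 := @Ordinal 6 4 isT.
Definition o5 : 'I_6 := @Ordinal 6 5 isT.

Lemma sum6 (R : zmodType) (F : 'I_6 -> R) :
  \sum_(i < 6) F i = F o0 + F o1 + F o2 + F o3 + F o4 + F o5.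
Proof.
rewrite !big_ord_recl big_ord0 addr0 /= !addrA.
by congr (_ + _ + _ + _ + _ + _); congr F; apply/val_inj.
Qed.

Lemma ord6P (P : 'I_6 -> Prop) : P o0 -> P o1 -> P o2 -> P o3 -> P o4 -> P o5 -> forall i, P i.
Proof.
move=> p0 p1 p2 p3 p4 p5 [[|[|[|[|[|[|i]]]]]] Hi] //.
- by rewrite (_ : Ordinal Hi = o0) //; apply/val_inj.
- by rewrite (_ : Ordinal Hi = o1) //; apply/val_inj.
- by rewrite (_ : Ordinal Hi = o2) //; apply/val_inj.
- by rewrite (_ : Ordinal Hi = o3) //; apply/val_inj.
- by rewrite (_ : Ordinal Hi = o4) //; apply/val_inj.
- by rewrite (_ : Ordinal Hi = o5) //; apply/val_inj.
Qed.


Section P.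
Variable C : numClosedFieldType.

Definition skf (p q r : C) (i j : nat) : C :=
  match i, j with
  | 0, 1 => p | 0, 2 => q | 1, 2 => r
  | 1, 0 => - p | 2, 0 => - q | 2, 1 => - r
  | _, _ => 0 end.
Definition ef (e00 e01 e02 e10 e11 e12 e20 e21 e22 : C) (i j : nat) : C :=
  match i, j with
  | 0, 0 => e00 | 0, 1 => e01 | 0, 2 => e02
  | 1, 0 => e10 | 1, 1 => e11 | 1, 2 => e12
  | 2, 0 => e20 | 2, 1 => e21 | 2, 2 => e22
  | _, _ => 0 end.
Lemma negself (a : C) : - a = a -> a = 0.
Proof.
move=> h; have : a + a = 0 by rewrite -{1}h addNr.
by rewrite -mulr2n -mulr_natr => /eqP; rewrite mulf_eq0 pnatr_eq0 orbF => /eqP.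
Qed.



Definition mkf (e00 e01 e02 e10 e11 e12 e20 e21 e22 g01 g02 g12 h01 h02 h12 : C) (i j : nat) : C :=
   (if i < 3 then
      (if j < 3 then ef e00 e01 e02 e10 e11 e12 e20 e21 e22 i j
       else skf g01 g02 g12 i (j - 3))
    else
      (if j < 3 then skf h01 h02 h12 (i - 3) j
       else ef e00 e01 e02 e10 e11 e12 e20 e21 e22 (j - 3) (i - 3)))%N.

Definition mkA (e00 e01 e02 e10 e11 e12 e20 e21 e22 g01 g02 g12 h01 h02 h12 : C) : 'M[C]_6 :=
  \matrix_(i < 6, j < 6) mkf e00 e01 e02 e10 e11 e12 e20 e21 e22 g01 g02 g12 h01 h02 h12 i j.

Lemma mx2E (f : 'I_6 -> 'I_6 -> C) i j :
  let M := \matrix_(i, j) f i j in (M *m M) i j = \sum_k f i k * f k j.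
Proof. by move=> M; rewrite !mxE; apply: eq_bigr => k _; rewrite !mxE. Qed.
Lemma mx3E (f : 'I_6 -> 'I_6 -> C) i j :
  let M := \matrix_(i, j) f i j in (M *m M *m M) i j = \sum_k (\sum_l f i l * f l k) * f k j.
Proof. by move=> M; rewrite mxE; apply: eq_bigr => k _; rewrite mx2E mxE. Qed.
Lemma mx1E (f : 'I_6 -> 'I_6 -> C) i j :
  let M := \matrix_(i, j) f i j in M i j = f i j.
Proof. by move=> M; rewrite mxE. Qed.
Lemma tr1E (f : 'I_6 -> 'I_6 -> C) :
  let M := \matrix_(i, j) f i j in \tr M = \sum_k f k k.
Proof. by rewrite /mxtrace; apply: eq_bigr => k _; rewrite mxE. Qed.
Lemma tr2E (f : 'I_6 -> 'I_6 -> C) :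
  let M := \matrix_(i, j) f i j in \tr (M *m M) = \sum_k \sum_l f k l * f l k.
Proof. by rewrite /mxtrace; apply: eq_bigr => k _; rewrite mx2E. Qed.
Lemma tr3E (f : 'I_6 -> 'I_6 -> C) :
  let M := \matrix_(i, j) f i j in \tr (M *m M *m M) = \sum_k \sum_m (\sum_l f k l * f l m) * f m k.
Proof. by rewrite /mxtrace; apply: eq_bigr => k _; rewrite mx3E. Qed.


Definition tr1 (f : 'I_6 -> 'I_6 -> C) := \sum_k f k k.
Definition tr2 (f : 'I_6 -> 'I_6 -> C) := \sum_k \sum_l f k l * f l k.
Definition tr3 (f : 'I_6 -> 'I_6 -> C) := \sum_k \sum_m (\sum_l f k l * f l m) * f m k.
Definition ent3 (f : 'I_6 -> 'I_6 -> C) i j :=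
  48 * (\sum_k (\sum_l f i l * f l k) * f k j) - (24 * tr1 f) * (\sum_k f i k * f k j)
  + (6 * (tr1 f ^+ 2 - 2 * tr2 f)) * f i j
  - (tr1 f ^+ 3 - 6 * tr1 f * tr2 f + 8 * tr3 f) * (i == j)%:R.

Lemma pf_gen (f : 'I_6 -> 'I_6 -> C) : (forall i j, ent3 f i j = 0) ->
  let A := \matrix_(i, j) f i j in
  48 *: (A *m A *m A) - (24 * \tr A) *: (A *m A)
  + (6 * (\tr A ^+ 2 - 2 * \tr (A *m A))) *: A
  - (\tr A ^+ 3 - 6 * \tr A * \tr (A *m A) + 8 * \tr (A *m A *m A))%:M = 0.
Proof.
move=> H A; rewrite /A tr1E tr2E tr3E; apply/matrixP => i j.
transitivity (ent3 f i j); last by rewrite H mxE.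
rewrite /ent3 !mxE /tr1 /tr2 /tr3; congr (_ - _ + _ - _).
- congr (_ * _); apply: eq_bigr => k _; rewrite !mxE; congr (_ * _);
  by apply: eq_bigr => l _; rewrite !mxE.
- congr (_ * _); apply: eq_bigr => k _; by rewrite !mxE.
- by rewrite mulr_natr.
Qed.

Lemma pfCH (e00 e01 e02 e10 e11 e12 e20 e21 e22 g01 g02 g12 h01 h02 h12 : C) :
  let A := mkA e00 e01 e02 e10 e11 e12 e20 e21 e22 g01 g02 g12 h01 h02 h12 in
  48 *: (A *m A *m A) - (24 * \tr A) *: (A *m A)
  + (6 * (\tr A ^+ 2 - 2 * \tr (A *m A))) *: A
  - (\tr A ^+ 3 - 6 * \tr A * \tr (A *m A) + 8 * \tr (A *m A *m A))%:M = 0.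
Proof.
rewrite /mkA; apply: pf_gen.
(rewrite /ent3 /tr1 /tr2 /tr3 !sum6; apply: ord6P; apply: ord6P;
  rewrite !sum6 /mkf /=; ring).
Qed.

Ltac solveE := first [ reflexivity
 | match goal with H : ?a = ?b |- ?a = ?b => exact H end
 | match goal with H : ?b = ?a |- ?a = ?b => exact (esym H) end
 | match goal with H : - ?a = ?a |- ?a = 0 => exact (negself H) end
 | match goal with H : ?a = - ?a |- ?a = 0 => exact (negself (esym H)) end
 | match goal with H : ?b = - ?a |- ?a = - ?b => by rewrite H opprK end
 | match goal with H : - ?a = ?b |- ?a = - ?b => by rewrite -H opprK end
 | match goal with H : - ?a = - ?b |- ?a = ?b => exact (oppr_inj H) end
 | match goal with H : - ?b = - ?a |- ?a = ?b => exact (esym (oppr_inj H)) end ].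

Lemma paramA (A : 'M[C]_6) : skew_hamiltonian A ->
  A = mkA (A o0 o0) (A o0 o1) (A o0 o2) (A o1 o0) (A o1 o1) (A o1 o2)
          (A o2 o0) (A o2 o1) (A o2 o2) (A o0 o4) (A o0 o5) (A o1 o5)
          (A o3 o1) (A o3 o2) (A o4 o2).
Proof.
move=> H.
have E : forall i j, (A^T *m Jmat) i j = (Jmat *m A) i j by move=> i j; rewrite H.
have e00 := E o0 o0.
have e01 := E o0 o1.
have e02 := E o0 o2.
have e03 := E o0 o3.
have e04 := E o0 o4.
have e05 := E o0 o5.
have e10 := E o1 o0.
have e11 := E o1 o1.
have e12 := E o1 o2.
have e13 := E o1 o3.
have e14 := E o1 o4.
have e15 := E o1 o5.
have e20 := E o2 o0.
have e21 := E o2 o1.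
have e22 := E o2 o2.
have e23 := E o2 o3.
have e24 := E o2 o4.
have e25 := E o2 o5.
have e30 := E o3 o0.
have e31 := E o3 o1.
have e32 := E o3 o2.
have e33 := E o3 o3.
have e34 := E o3 o4.
have e35 := E o3 o5.
have e40 := E o4 o0.
have e41 := E o4 o1.
have e42 := E o4 o2.
have e43 := E o4 o3.
have e44 := E o4 o4.
have e45 := E o4 o5.
have e50 := E o5 o0.
have e51 := E o5 o1.
have e52 := E o5 o2.
have e53 := E o5 o3.
have e54 := E o5 o4.
have e55 := E o5 o5.
rewrite !mxE !sum6 !mxE /= ?(mulr0, mul0r, mulr1, mul1r, addr0, add0r, mulrN1, mulN1r) in e00 e01 e02 e03 e04 e05 e10 e11 e12 e13 e14 e15 e20 e21 e22 e23 e24 e25 e30 e31 e32 e33 e34 e35 e40 e41 e42 e43 e44 e45 e50 e51 e52 e53 e54 e55.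
apply/matrixP => i j; move: i j; apply: ord6P; apply: ord6P; rewrite mxE /mkf /=; solveE.
Qed.

End P.

Section V.
Variable C : numClosedFieldType.
Variable S : 'I_6 -> 'M[C]_6.

Definition vv (M : 'M[C]_6) : 'cV[C]_6 := \col_k \tr (M *m S k).

Lemma vvD M N : vv (M + N) = vv M + vv N.
Proof. by apply/matrixP => k l; rewrite !mxE mulmxDl mxtraceD. Qed.

Lemma vvZ a M : vv (a *: M) = a *: vv M.
Proof. by apply/matrixP => k l; rewrite !mxE -scalemxAl mxtraceZ. Qed.

Lemma vvT M : (forall k, (S k)^T = S k) -> vv M^T = vv M.
Proof.
move=> hS; apply/matrixP => k l; rewrite !mxE.
by rewrite -mxtrace_tr trmx_mul trmxK hS mxtrace_mulC.
Qed.

Lemma vvA (A : 'M[C]_6) M :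
  (forall k a b, S k a b = S a k b) -> (forall r, A *m S r = S r *m A^T) ->
  A *m vv M = vv (A^T *m M).
Proof.
move=> hS1 hAS; apply/matrixP => j l; rewrite !mxE.
have e : \sum_k A j k *: S k = S j *m A^T.
  apply/matrixP => a b; rewrite summxE.
  transitivity ((A *m S a) j b).
    by rewrite mxE; apply: eq_bigr => k _; rewrite !mxE hS1.
  rewrite hAS !mxE; apply: eq_bigr => m _; by rewrite !mxE hS1.
transitivity (\tr (M *m \sum_k A j k *: S k)).
  rewrite mulmx_sumr raddf_sum; apply: eq_bigr => k _ /=.
  by rewrite !mxE -scalemxAr mxtraceZ.
by rewrite e mulmxA mxtrace_mulC mulmxA.
Qed.

Lemma vvB (A : 'M[C]_6) al be ga M :
  (forall k a b, S k a b = S a k b) -> (forall r, A *m S r = S r *m A^T) ->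
  Bmat A al be ga *m vv M = vv ((Bmat A al be ga)^T *m M).
Proof.
move=> hS1 hAS; rewrite /Bmat !linearD /= !linearZ /= trmx1 trmx_mul.
rewrite !mulmxDl !vvD -!scalemxAl !vvZ mul1mx -mulmxA !vvA // mulmxA. by rewrite [in RHS]mulmxE mul1r.
Qed.

End V.

Lemma tr2E' (C : numClosedFieldType) (P Q : 'M[C]_6) :
  \tr (P *m Q) = \sum_a \sum_b P a b * Q b a.
Proof. by rewrite /mxtrace; apply: eq_bigr => a _; rewrite mxE. Qed.

Lemma tr3E' (C : numClosedFieldType) (P Q R : 'M[C]_6) :
  \tr (P *m (Q *m R)) = \sum_a \sum_b P a b * \sum_c Q b c * R c a.
Proof.
rewrite /mxtrace; apply: eq_bigr => a _; rewrite mxE.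
by apply: eq_bigr => b _; rewrite mxE.
Qed.

Unset Implicit Arguments.
Set Strict Implicit.

Theorem mainTheorem14 (C : numClosedFieldType) (A : 'M[C]_6) (H0 : 'cV[C]_6 -> C)
    (lam al be ga : 'I_3 -> C)
    (gradH : 'cV[C]_6 -> 'cV[C]_6) (hessH df0 : 'cV[C]_6 -> 'M[C]_6)
    (gp : 'cV[C]_6 -> 'cV[C]_6) (gq : 'I_3 -> 'cV[C]_6 -> 'cV[C]_6) :
  (* standing setup *)
  A \is a mxOver Num.real ->
  skew_hamiltonian A ->
  homogeneous_cubic H0 ->
  (* gradH = grad H0, hessH = Hesse matrix of H0, df0 = Jacobian of f0 = J grad H0 *)
  (forall x, real_vec x -> forall k, has_partial H0 x k (gradH x k 0)) ->
  (forall x, real_vec x -> forall k l,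
      has_partial (fun y => gradH y k 0) x l (hessH x k l)) ->
  (forall x, real_vec x -> forall k l,
      has_partial (fun y => (Jmat *m gradH y) k 0) x l (df0 x k l)) ->
  (forall x, real_vec x -> A *m hessH x = hessH x *m A^T) ->
  (* genericity *)
  injective lam ->
  char_poly A = \prod_(j < 3) ('X - (lam j)%:P) ^+ 2 ->
  (* interpolation coefficients of B_i *)
  (forall i j, al i + be i * lam j + ga i * lam j ^+ 2 = if i == j then -1 else 1) ->
  (* gp = grad p0, gq i = grad q_i *)
  (forall x, real_vec x -> forall k, has_partial (p0fun df0) x k (gp x k 0)) ->
  (forall i x, real_vec x -> forall k,
      has_partial (qfun (Bmat A (al i) (be i) (ga i)) df0) x k (gq i x k 0)) ->
  forall i x, real_vec x -> gp x = Bmat A (al i) (be i) (ga i) *m gq i x.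
Proof.
move=> hAr hSH [c [creal hc]] hgrad hhess hdf0 hcomm ilam hchar hint hgp hgq i x hx.
pose B := Bmat A (al i) (be i) (ga i).
have hBB : B *m B = 1%:M.
  have hrel := pfCH (A o0 o0) (A o0 o1) (A o0 o2) (A o1 o0) (A o1 o1) (A o1 o2)
    (A o2 o0) (A o2 o1) (A o2 o2) (A o0 o4) (A o0 o5) (A o1 o5) (A o3 o1) (A o3 o2) (A o4 o2).
  rewrite /= -(paramA hSH) in hrel.
  apply: (BB _ hrel ilam).
  - by rewrite pnatr_eq0.
  - move=> j; rewrite eigenvalue_root_char hchar /root horner_prod (bigD1 j) //=.
    by rewrite horner_exp hornerXsubC subrr expr0n /= mul0r.
  - by move=> j; rewrite hint; case: (i == j); rewrite ?sqrrN expr1n.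
have gradE : forall y, real_vec y -> forall k,
    gradH y k 0 = \sum_a \sum_b Wc c k a b * y a 0 * y b 0.
  move=> y hy k; apply: (hp_unique (hgrad y hy k)).
  exact: (hp_ext (fun z hz => hc z hz) hy (hp_cub c y k)).
pose T r k l := Wc c k l r + Wc c k r l.
pose S r : 'M[C]_6 := \matrix_(k, l) T r k l.
have hessE : forall y, real_vec y -> hessH y = \sum_r y r 0 *: S r.
  move=> y hy; apply/matrixP => k l; rewrite summxE.
  rewrite (hp_unique (hhess y hy k l)
    (hp_ext (fun z hz => gradE z hz k) hy (hp_quad (Wc c k) y l))).
  by apply: eq_bigr => r _; rewrite !mxE mulrC.
have df0E : forall y, real_vec y -> df0 y = Jmat *m hessH y.
  move=> y hy; apply/matrixP => k l.
  apply: (hp_unique (hdf0 y hy k l)).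
  apply: (hp_ext_all (g := fun z => \sum_j Jmat k j * gradH z j 0)).
    by move=> z; rewrite !mxE.
  apply: hp_eq; first by apply: hp_sum => j; apply: hp_scale; apply: hhess.
  by rewrite !mxE.
have Tsym1 : forall r k l, T r k l = T r l k by move=> r k l; rewrite /T /Wc; ring.
have Tsym2 : forall r k l, T r k l = T k r l by move=> r k l; rewrite /T /Wc; ring.
have ST : forall r, (S r)^T = S r by move=> r; apply/matrixP => a b; rewrite /S !mxE Tsym1.
have S1 : forall k a b, S k a b = S a k b by move=> k a b; rewrite /S !mxE Tsym2.
have AS : forall r, A *m S r = S r *m A^T.
  move=> r; have hr : real_vec (delta_mx r 0 : 'cV[C]_6).
    by move=> k; rewrite mxE realn.
  have := hcomm _ hr; rewrite hessE //.
  suff -> : \sum_m (delta_mx r 0 : 'cV[C]_6) m 0 *: S m = S r by [].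
  rewrite (bigD1 r) //= mxE !eqxx /= mulr1n scale1r big1 ?addr0 // => m hm.
  by rewrite mxE (negPf hm) /= mulr0n scale0r.
have JT : (Jmat : 'M[C]_6)^T = - Jmat.
  apply/matrixP => a b; rewrite !mxE; move: a b; apply: ord6P; apply: ord6P;
    rewrite /= ?oppr0 ?opprK //.
have JB : B^T *m Jmat = Jmat *m B.
  rewrite /B /Bmat !linearD /= !linearZ /= trmx1 trmx_mul.
  rewrite !mulmxDl -!scalemxAl; congr (_ *: _ + _ *: _ + _ *: _).
  - by rewrite mul1mx mulmx1.
  - exact: hSH.
  - by rewrite -mulmxA hSH mulmxA hSH -mulmxA.
have hT : (hessH x)^T = hessH x.
  rewrite hessE // linear_sum; apply: eq_bigr => r _ /=.
  by rewrite linearZ /= ST.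
have hE : forall a b k, has_partial (fun y => df0 y a b) x k ((Jmat *m S k) a b).
  move=> a b k.
  apply: (hp_ext (g := fun y => \sum_r (Jmat *m S r) a b * y r 0)) => //; last first.
    exact: (hp_lin (fun r => (Jmat *m S r) a b)).
  move=> y hy; rewrite df0E // hessE // mulmx_sumr summxE; apply: eq_bigr => r _.
  by rewrite -scalemxAr mxE mulrC.
set h := hessH x.
have dx : df0 x = Jmat *m h by rewrite df0E.
have gpE : gp x = 4^-1 *: vv S (Jmat *m h *m Jmat).
  apply/matrixP => k l; rewrite (ord1 l) !mxE.
  apply: (hp_unique (hgp x hx k)).
  apply: (hp_ext_all (g := fun y => 8^-1 * \sum_a \sum_b df0 y a b * df0 y b a)).
    by move=> y; rewrite /p0fun tr2E'.
  apply: hp_eq.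
    apply: hp_scale; apply: hp_sum => a; apply: hp_sum => b.
    by apply: hp_mul; apply: hE.
  rewrite /=.
  under eq_bigr => a _ do rewrite big_split /=.
  rewrite big_split /= -!tr2E' [X in _ + X]mxtrace_mulC dx !mulmxA.
  set t := \tr _.
  by field.
have key : vv S (Jmat *m h *m B^T *m Jmat) = vv S (B^T *m Jmat *m h *m Jmat).
  rewrite -(vvT _ ST) !trmx_mul trmxK JT hT !mulmxN !mulNmx opprK.
  by rewrite !mulmxA -JB.
have key' : forall k, \tr (Jmat *m h *m B^T *m Jmat *m S k)
    = \tr (B^T *m Jmat *m h *m Jmat *m S k).
  by move=> k; have := congr1 (fun v : 'cV[C]_6 => v k 0) key; rewrite !mxE.
have gqE : gq i x = 4^-1 *: vv S (B^T *m Jmat *m h *m Jmat).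
  apply/matrixP => k l; rewrite (ord1 l) !mxE.
  apply: (hp_unique (hgq i x hx k)).
  apply: (hp_ext_all (g := fun y =>
     8^-1 * \sum_a \sum_b B^T a b * \sum_d df0 y b d * df0 y d a)).
    by move=> y; rewrite /qfun tr3E'.
  apply: hp_eq.
    apply: hp_scale; apply: hp_sum => a; apply: hp_sum => b; apply: hp_scale.
    by apply: hp_sum => d; apply: hp_mul; apply: hE.
  rewrite /=.
  under eq_bigr => a _ do under eq_bigr => b _ do rewrite big_split /= mulrDr.
  under eq_bigr => a _ do rewrite big_split /=.
  rewrite big_split /= -!tr3E' [in X in _ + X]mulmxA [X in _ + X]mxtrace_mulC dx !mulmxA key'.
  by field.
rewrite gpE gqE -scalemxAr (vvB _ _ _ _ S1 AS) -/B !mulmxA -trmx_mul hBB trmx1 mul1mx.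
by [].
Qed.
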